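(* Let $\Delta\ge 4$ and let $T$ be a tree of order $n$ with maximum degree $\Delta$. For $1\le i\le\Delta$ let $n_i$ be the number of vertices of $T$ of degree $i$, and for $1\le p\le q\le \Delta$ let $m_{p,q}$ be the number of edges of $T$ joining a vertex of degree $p$ to a vertex of degree $q$. Put $t=\left\lfloor\frac{\Delta+3}{2}\right\rfloor$ and $E_{\le t}=\sum_{1\le p\le q\le t} m_{p,q}$. Assume that $\Delta$ divides $n$, that $n_{i'}=0$ for all integers $i'$ with $t<i'<\Delta$, and that $m_{\Delta,\Delta}=0$. Then $E_{\le t}\ge \Delta-1$. *)

(* Defs.v *)
From mathcomp Require Import all_boot.
Set Implicit Arguments. Unset Strict Implicit. Unset Printing Implicit Defensive.

Section Graph.
Variables (V : finType) (e : rel V).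

Definition simple_graph := symmetric e /\ irreflexive e.

Definition connected_graph := forall x y : V, connect e x y.

Definition acyclic_graph :=
  forall c : seq V, uniq c -> 2 < size c -> ~~ cycle e c.

Definition is_tree := [/\ simple_graph, connected_graph & acyclic_graph].

Definition deg (x : V) : nat := #|[set y | e x y]|.

Definition max_deg : nat := \max_(x : V) deg x.

Definition n_deg (i : nat) : nat := #|[set x : V | deg x == i]|.

Definition m_deg (p q : nat) : nat :=
  #|[set f : {set V} | [exists x, exists y,
      [&& e x y, f == [set x; y], deg x == p & deg y == q]]]|.

Definition E_le (t : nat) : nat :=
  \sum_(1 <= q < t.+1) \sum_(1 <= p < q.+1) m_deg p q.

End Graph.

(* Main.v *)
Require Import Defs.
From mathcomp Require Import all_boot.
From mathcomp Require Import zify.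
Set Implicit Arguments. Unset Strict Implicit. Unset Printing Implicit Defensive.

Section Forest.
Variable V : finType.

Lemma set2_eqE (x y u v : V) : x != y ->
  ([set u; v] == [set x; y]) = ((u == x) && (v == y)) || ((u == y) && (v == x)).
Proof.
move=> nxy; apply/idP/idP.
  move/eqP=> E.
  have hu : u \in [set x; y] by rewrite -E set21.
  have hv : v \in [set x; y] by rewrite -E set22.
  have hX : x \in [set u; v] by rewrite E set21.
  have hY : y \in [set u; v] by rewrite E set22.
  move: hu hv hX hY; rewrite !inE => /orP[]/eqP-> /orP[]/eqP->;
  rewrite ?eqxx //=.
all: rewrite ?(eq_sym y x) ?(negbTE nxy) ?orbT //=.
case/orP=> /andP[/eqP-> /eqP->] //; by rewrite setUC.
Qed.

Definition relF (F : {set {set V}}) : rel V := fun u v => (u != v) && ([set u; v] \in F).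
Definition cls (r : rel V) z := [set w | connect r z w].
Definition classes (r : rel V) := [set cls r z | z : V].
Definition ncomp (r : rel V) := #|classes r|.
Definition pairs (F : {set {set V}}) := forall f, f \in F -> exists x y, x != y /\ f = [set x; y].

Lemma relF_sym F : symmetric (relF F).
Proof. by move=> u v; rewrite /relF eq_sym setUC. Qed.

Lemma cls_eq (r : rel V) (sr : symmetric r) (a b : V) : connect r a b -> cls r a = cls r b.
Proof.
move=> hab; apply/setP=> w; rewrite !inE; apply/idP/idP => h.
  apply: connect_trans h; by rewrite (sym_connect_sym sr).
exact: connect_trans hab h.
Qed.

Lemma cls_conn (r : rel V) (a b : V) : cls r a = cls r b -> connect r a b.
Proof. move=> E; have : b \in cls r b by rewrite inE connect0. by rewrite -E inE. Qed.

Lemma ncomp0 : ncomp (relF set0) = #|V|.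
Proof.
have E : forall z, cls (relF set0) z = [set z].
  move=> z; apply/setP=> w; rewrite !inE; apply/idP/idP.
    case/connectP=> [[|a p]] /=; first by move=> _ ->.
    by rewrite /relF inE andbF.
  by move/eqP->; rewrite connect0.
rewrite /ncomp /classes (eq_imset _ E) card_imset //; exact: set1_inj.
Qed.

Lemma relF_D1 (F : {set {set V}}) (x y u v : V) : x != y -> [set x; y] \in F ->
  relF F u v = relF (F :\ [set x; y]) u v || ((u == x) && (v == y)) || ((u == y) && (v == x)).
Proof.
move=> nxy hF; rewrite /relF in_setD1 -orbA -(set2_eqE u v nxy).
case E: ([set u; v] == [set x; y]); last by rewrite /= orbF.
rewrite orbT; move: E; rewrite set2_eqE // => /orP[] /andP[/eqP-> /eqP->].
  by rewrite nxy hF.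
by rewrite eq_sym nxy setUC hF.
Qed.

Lemma L2 (r r' : rel V) (x y : V) (sr' : symmetric r')
  (hr : forall u v, r u v = r' u v || ((u == x) && (v == y)) || ((u == y) && (v == x))) z w :
  connect r z w -> connect r' z w \/
   ((connect r' x z || connect r' y z) && (connect r' x w || connect r' y w)).
Proof.
have cs := sym_connect_sym sr'.
case/connectP => p hp ->; elim: p z hp => [|a p IH] z /=.
  by move=> _; left; exact: connect0.
case/andP => hza hp; case: (IH a hp) => [ca | /andP[Aa Aw]].
  rewrite hr in hza; case/orP: hza => [/orP[h | /andP[/eqP ? /eqP ?]] | /andP[/eqP ? /eqP ?]]; subst.
  - by left; exact: connect_trans (connect1 h) ca.
  - by right; rewrite connect0 ca orbT.
  - by right; rewrite connect0 ca orbT.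
right; rewrite Aw andbT.
rewrite hr in hza; case/orP: hza => [/orP[h | /andP[/eqP-> _]] | /andP[/eqP-> _]];
  last 2 first.
- by rewrite connect0.
- by rewrite connect0 orbT.
have haz : connect r' a z by rewrite cs; exact: connect1.
by case/orP: Aa => h2; [rewrite (connect_trans h2 haz) | rewrite (connect_trans h2 haz) orbT].
Qed.

Lemma L3 (F : {set {set V}}) (x y : V) : x != y -> [set x; y] \in F -> acyclic_graph (relF F) ->
  ~~ connect (relF (F :\ [set x; y])) x y.
Proof.
move=> nxy hF ac; apply/negP => /connectP [p hp].
case: (shortenP hp) => p' hp' up' _ Ly.
suff [hs hc] : 2 < size (x :: p') /\ cycle (relF F) (x :: p').
  by move: (ac _ up' hs); rewrite hc.
split.
  case: p' hp' up' Ly => [|a [|b q]] //=.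
    by move=> _ _ E; rewrite E eqxx in nxy.
  by move=> /andP[h _] _ E; move: h; rewrite -E /relF setD11 andbF.
rewrite /cycle rcons_path -Ly; apply/andP; split; last first.
  by rewrite /relF eq_sym nxy setUC hF.
apply: sub_path hp' => u v; rewrite /relF in_setD1 => /andP[-> /andP[_ ->]].
done.
Qed.


Definition hmap (r : rel V) (K : {set V}) := [set w | [exists z in K, connect r z w]].

Lemma hmap_cls (r r' : rel V) (sub : subrel r' r) z : hmap r (cls r' z) = cls r z.
Proof.
apply/setP=> w; rewrite !inE; apply/existsP/idP.
  case=> a /andP[]; rewrite inE => h1 h2; apply: connect_trans h2.
  apply: connect_sub h1 => u v h; apply: connect1; exact: sub.
by move=> h; exists z; rewrite inE connect0.
Qed.

Lemma classes_hmap (r r' : rel V) (sub : subrel r' r) :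
  classes r = hmap r @: classes r'.
Proof.
rewrite /classes -imset_comp; apply: eq_imset => z /=; by rewrite hmap_cls.
Qed.

Lemma pairs_D1 (F : {set {set V}}) f : pairs F -> pairs (F :\ f).
Proof. move=> pF g; rewrite in_setD1 => /andP[_]; exact: pF. Qed.

Lemma subrel_D1 (F : {set {set V}}) f : subrel (relF (F :\ f)) (relF F).
Proof. by move=> u v; rewrite /relF in_setD1 => /andP[-> /andP[_ ->]]. Qed.

Lemma forest_ge n : forall F : {set {set V}}, #|F| = n -> pairs F ->
  #|V| <= #|F| + ncomp (relF F).
Proof.
elim: n => [|n IH] F hn pF.
  move/eqP: hn; rewrite cards_eq0 => /eqP ->; by rewrite ncomp0 cards0.
have [f fF] : exists f, f \in F by apply/set0Pn; rewrite -card_gt0 hn.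
have [x [y [nxy Ef]]] := pF f fF; subst f.
set F' := F :\ [set x; y].
have cF : #|F| = #|F'|.+1 by rewrite (cardsD1 [set x; y] F) fF.
have hn' : #|F'| = n by apply/eqP; rewrite -eqSS -cF hn.
have IH' := IH F' hn' (@pairs_D1 F [set x; y] pF).
rewrite cF.
suff h : ncomp (relF F') <= (ncomp (relF F)).+1.
  by apply: leq_trans IH' _; rewrite addSn -addnS leq_add2l.
set r := relF F; set r' := relF F'.
have sub : subrel r' r := @subrel_D1 F [set x; y].
have hr : forall u v, r u v = r' u v || ((u == x) && (v == y)) || ((u == y) && (v == x)).
  by move=> u v; exact: (@relF_D1 F x y u v nxy fF).
have sr' : symmetric r' := relF_sym F'.
rewrite /ncomp (classes_hmap sub).
have ex : forall c, cls r' c != cls r' y -> connect r' x c || connect r' y c -> cls r' c = cls r' x.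
  move=> c nc /orP[h|h]; first by rewrite (cls_eq sr' h).
  by rewrite -(cls_eq sr' h) eqxx in nc.
have inj : {in (classes r') :\ cls r' y &, injective (hmap r)}.
  move=> K1 K2; rewrite !in_setD1 => /andP[n1 /imsetP[a _ E1]] /andP[n2 /imsetP[b _ E2]].
  subst K1 K2.
  rewrite !(hmap_cls sub) => /cls_conn /(L2 sr' hr) [h | /andP[Aa Ab]]; first by apply: cls_eq.
  by rewrite (ex a n1 Aa) (ex b n2 Ab).
rewrite (cardsD1 (cls r' y) (classes r')) addnC -(card_in_imset inj) -addn1 leq_add ?leq_b1 //.
apply: subset_leq_card; apply: imsetS; exact: subD1set.
Qed.


Lemma forest_le n : forall F : {set {set V}}, #|F| = n -> pairs F ->
  acyclic_graph (relF F) -> #|F| + ncomp (relF F) <= #|V|.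
Proof.
elim: n => [|n IH] F hn pF ac.
  move/eqP: hn; rewrite cards_eq0 => /eqP ->; by rewrite ncomp0 cards0.
have [f fF] : exists f, f \in F by apply/set0Pn; rewrite -card_gt0 hn.
have [x [y [nxy Ef]]] := pF f fF; subst f.
set F' := F :\ [set x; y].
have cF : #|F| = #|F'|.+1 by rewrite (cardsD1 [set x; y] F) fF.
have hn' : #|F'| = n by apply/eqP; rewrite -eqSS -cF hn.
set r := relF F; set r' := relF F'.
have sub : subrel r' r := @subrel_D1 F [set x; y].
have ac' : acyclic_graph r'.
  move=> c uc sc; apply/negP => hc; move: (ac c uc sc); by rewrite (sub_cycle sub hc).
have IH' := IH F' hn' (@pairs_D1 F [set x; y] pF) ac'.
rewrite cF.
suff h : (ncomp r).+1 <= ncomp r'.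
  by apply: leq_trans IH'; rewrite addSn -addnS leq_add2l.
have nc := @L3 F x y nxy fF ac.
rewrite /ncomp (classes_hmap sub) ltn_neqAle leq_imset_card andbT.
apply/negP => /imset_injP inj.
have hx : cls r' x \in classes r' by apply: imset_f.
have hy : cls r' y \in classes r' by apply: imset_f.
have := inj _ _ hx hy.
have rxy : r x y by rewrite /r /relF nxy fF.
rewrite !(hmap_cls sub) (cls_eq (relF_sym F) (connect1 rxy)) => /(_ erefl) /cls_conn.
by rewrite (negbTE nc).
Qed.

End Forest.

Lemma card_bigcup_seq (T : finType) (I : Type) (s : seq I) (F : I -> {set T}) :
  #|\bigcup_(i <- s) F i| <= \sum_(i <- s) #|F i|.
Proof.
elim: s => [|a s IH]; first by rewrite !big_nil cards0.
rewrite !big_cons; apply: leq_trans (leq_card_setU _ _) _; by rewrite leq_add2l.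
Qed.
Lemma mem_bigcup_seq (T : finType) (I : eqType) (s : seq I) (F : I -> {set T}) i a :
  i \in s -> a \in F i -> a \in \bigcup_(j <- s) F j.
Proof.
elim: s => [|b s IH] //; rewrite inE big_cons in_setU => /orP[/eqP <- -> //|/IH h /h ->].
by rewrite orbT.
Qed.
Unset Implicit Arguments.
Theorem lemma4p4 (V : finType) (e : rel V) (Delta : nat) :
  is_tree e ->
  4 <= Delta ->
  max_deg e = Delta ->
  Delta %| #|V| ->
  (forall i : nat, (Delta + 3)./2 < i < Delta -> n_deg e i = 0) ->
  m_deg e Delta Delta = 0 ->
  Delta - 1 <= E_le e (Delta + 3)./2.
Proof.
move=> [[sym irr] conn ac] hD hmax hdiv hgap hmm.
set t := (Delta + 3)./2.
set Ed := [set f : {set V} | [exists x, exists y, e x y && (f == [set x; y])]].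
have pEd : pairs Ed.
  move=> f; rewrite inE => /existsP[x /existsP[y /andP[exy /eqP ->]]].
  exists x, y; split => //; apply/negP => /eqP E; by rewrite E irr in exy.
have eqr : relF Ed =2 e.
  move=> u v; rewrite /relF inE; apply/andP/idP.
    case=> nuv /existsP[x /existsP[y /andP[exy /eqP E]]].
    have nxy : x != y by apply/negP => /eqP E'; rewrite E' irr in exy.
    have := set2_eqE u v nxy; rewrite E eqxx => /esym/orP[] /andP[/eqP-> /eqP->] //.
    by rewrite sym.
  move=> euv; split; first by apply/negP => /eqP E; rewrite E irr in euv.
  by apply/existsP; exists u; apply/existsP; exists v; rewrite euv eqxx.
have acE : acyclic_graph (relF Ed).
  move=> c uc sc; rewrite (eq_cycle eqr); exact: ac.
have [x0 _] : exists x0 : V, true.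
  case: (pickP (fun _ : V => true)) => [x0 _|h0]; first by exists x0.
  move: hmax; rewrite /max_deg big_pred0 // => ?; lia.
have nc1 : ncomp (relF Ed) = 1.
  rewrite /ncomp.
  have -> : classes (relF Ed) = [set setT].
    apply/setP => K; rewrite inE; apply/imsetP/eqP.
      case=> z _ ->; apply/setP => w; rewrite !inE (eq_connect eqr); exact: conn.
    move=> ->; exists x0 => //; apply/setP => w; rewrite !inE (eq_connect eqr).
    by rewrite conn.
  by rewrite cards1.
have Ege := forest_ge (erefl _) pEd; have Ele := forest_le (erefl _) pEd acE.
rewrite nc1 in Ege Ele.
set D := [set x | deg e x == Delta].
set P := [set p : V * V | (p.1 \in D) && e p.1 p.2].
have cardP : #|P| = #|D| * Delta.
  rewrite -sum1_card (eq_bigl (fun p : V * V => (p.1 \in D) && e p.1 p.2)) => [|p]; last by rewrite inE.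
  rewrite -(pair_big_dep (fun i => i \in D) (fun i j => e i j) (fun _ _ => 1)).
  rewrite -sum_nat_const; apply: eq_bigr => i; rewrite inE => /eqP <-.
  rewrite /deg -sum1_card; apply: eq_bigl => j; by rewrite inE.
set M := fun p q => [set f : {set V} | [exists x, exists y,
      [&& e x y, f == [set x; y], deg e x == p & deg e y == q]]].
have M0 : M Delta Delta = set0 by apply/eqP; rewrite -cards_eq0; apply/eqP; exact: hmm.
set g := fun p : V * V => [set p.1; p.2].
have injP : {in P &, injective g}.
  move=> [a b] [c d]; rewrite !inE /= => /andP[Da eab] /andP[Dc ecd] /eqP.
  have ncd : c != d by apply/negP => /eqP E; rewrite E irr in ecd.
  rewrite /g /= (set2_eqE a b ncd) => /orP[] /andP[/eqP E1 /eqP E2]; rewrite E1 E2 in Da eab *; first by [].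
  have : [set d; c] \in M Delta Delta.
    rewrite inE; apply/existsP; exists d; apply/existsP; exists c.
    by rewrite eab eqxx Da Dc.
  by rewrite M0 inE.
set DE := g @: P.
have cDE : #|DE| = #|D| * Delta by rewrite card_in_imset.
have DEsub : DE \subset Ed.
  apply/subsetP => f /imsetP[[a b]]; rewrite inE /= => /andP[_ eab] ->.
  by rewrite inE; apply/existsP; exists a; apply/existsP; exists b; rewrite eab eqxx.
set SS := Ed :\: DE.
have cSS : #|SS| = #|Ed| - #|DE| by rewrite cardsD (setIidPr DEsub).
have degle : forall x, deg e x <= Delta by move=> x; rewrite -hmax; exact: leq_bigmax.
have degsmall : forall x y, e x y -> deg e x != Delta -> 1 <= deg e x <= t.
  move=> x y exy nd.
  have -> : 1 <= deg e x by rewrite /deg card_gt0; apply/set0Pn; exists y; rewrite inE.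
  case: (leqP (deg e x) t) => // lt.
  have := hgap (deg e x); rewrite lt /= ltn_neqAle nd degle => /(_ isT) /eqP.
  rewrite /n_deg cards_eq0 => /eqP E0.
  have : x \in [set z | deg e z == deg e x] by rewrite inE.
  by rewrite E0 inE.
set U := \bigcup_(q <- index_iota 1 t.+1) \bigcup_(p <- index_iota 1 q.+1) M p q.
have UE : #|U| <= E_le e t.
  apply: leq_trans (card_bigcup_seq _ _) _; apply: leq_sum => q _.
  exact: card_bigcup_seq.
have key : forall a b, e a b -> deg e a <= deg e b -> deg e a != Delta -> deg e b != Delta ->
    [set a; b] \in U.
  move=> a b eab le na nb.
  have /andP[ha1 ha2] := degsmall a b eab na.
  have /andP[hb1 hb2] : 1 <= deg e b <= t by apply: (degsmall b a) => //; rewrite sym.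
  apply: (@mem_bigcup_seq _ _ _ _ (deg e b)); first by rewrite mem_index_iota hb1 ltnS.
  apply: (@mem_bigcup_seq _ _ _ _ (deg e a)); first by rewrite mem_index_iota ha1 ltnS.
  rewrite inE; apply/existsP; exists a; apply/existsP; exists b; by rewrite eab !eqxx.
have SSU : SS \subset U.
  apply/subsetP => f; rewrite !inE => /andP[nDE /existsP[x /existsP[y /andP[exy /eqP Ef]]]].
  have nx : deg e x != Delta.
    apply/negP => hx; move/negP: nDE; apply; apply/imsetP; exists (x, y) => //.
    by rewrite inE /= inE hx exy.
  have ny : deg e y != Delta.
    apply/negP => hy; move/negP: nDE; apply; apply/imsetP; exists (y, x).
      by rewrite inE /= inE hy sym exy.
    by rewrite Ef /g /= setUC.
  rewrite Ef; case: (leqP (deg e x) (deg e y)) => h; first exact: key.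
  rewrite setUC; apply: key => //; [by rewrite sym | exact: ltnW].
have hSS : #|SS| <= E_le e t := leq_trans (subset_leq_card SSU) UE.
have hDE : #|DE| <= #|Ed| := subset_leq_card DEsub.
case/dvdnP: hdiv => m hm.
have km : #|D| < m.
  rewrite -(ltn_pmul2r (_ : 0 < Delta)); last by lia.
  move: Ele hm hDE cDE; set KD := #|D| * Delta; set MD := m * Delta; move=> h1 h2 h3 h4.
  rewrite -h4 -h2; apply: leq_ltn_trans h3 _; by rewrite -addn1.
have : #|D|.+1 * Delta <= m * Delta by rewrite leq_pmul2r; [exact: km | lia].
rewrite mulSn; move: hSS cSS cDE hm Ege Ele hDE.
set KD := #|D| * Delta; set MD := m * Delta.
move=> h0 h1 h2 h3 h4 h5 h6 h7.
apply: leq_trans h0; rewrite h1 h2.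
have h8 : MD <= #|Ed| + 1 by rewrite -h3.
move: h8 h7; set nE := #|Ed|; lia.
Qed.
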